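(* Let $c_{\mathrm{rew}},c_{\mathrm{ver}}>0$, $c_{\min}=\min\{c_{\mathrm{rew}},c_{\mathrm{ver}}\}$, and for integers $s\ge0$ let $S_s=\{(a,b)\in\mathbb Z_{\ge0}^2:a\le b,\ 2^sc_{\min}\le c_{\mathrm{rew}}2^b+c_{\mathrm{ver}}2^{b-a}<2^{s+1}c_{\min}\}$; for nonempty $S_s$ let $b^\star_s=\max\{b:(a,b)\in S_s\}$, $j^\star_s=\max\{b-a:(a,b)\in S_s\}$, $m_s=\lceil2^{b^\star_s+1}\rceil$ and $k_s=\lceil6\cdot2^{j^\star_s}\rceil$. Fix a threshold $t$ with $q_t>0$ and $s_t>0$, let $(a,b)$ be its dyadic pair, and let $s_\star$ be the shell with $(a,b)\in S_{s_\star}$. Then for every integer $u\ge0$, $(a,b+u)\in S_{s_\star+u}$; consequently \[ m_{s_\star+u}\ge\lceil2^{b+u+1}\rceil,\qquad k_{s_\star+u}\ge\lceil6\cdot2^{b-a+u}\rceil. \]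
   Context: Here $R\sim\mathcal D$ for a distribution $\mathcal D$ on $\mathbb R$ and $V\in\{0,1\}$ with $\Pr(V=1\mid R=r)=h^\star(r)$; $q_t=\Pr(R\ge t)$ and $s_t=\Pr(R\ge t,V=1)$. The dyadic pair of $t$ is the pair of integers $(a,b)$ with $a,b\ge0$, $2^{-a-1}<q_t\le2^{-a}$ and $2^{-b}\le s_t<2^{-b+1}$ (it satisfies $a\le b$). *)

(* Defs.v *)
From HB Require Import structures.
From mathcomp Require Import all_boot all_order all_algebra.
From mathcomp Require Import all_classical all_reals all_analysis.
Set Implicit Arguments. Unset Strict Implicit. Unset Printing Implicit Defensive.
Import Order.TTheory GRing.Theory Num.Theory.
Local Open Scope ring_scope.
Local Open Scope classical_set_scope.

Section Defs.
Variable R : realType.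

Definition cmin (crew cver : R) : R := Num.min crew cver.

Definition inS (crew cver : R) (s a b : nat) : bool :=
  [&& (a <= b)%N,
      (2 ^+ s * cmin crew cver <= crew * 2 ^+ b + cver * 2 ^+ (b - a)) &
      (crew * 2 ^+ b + cver * 2 ^+ (b - a) < 2 ^+ s.+1 * cmin crew cver)].

(* S_s is contained in {(a,b) : a <= b <= s} (since c_rew 2^b < 2^(s+1) c_min
   <= 2^(s+1) c_rew), so maxima over S_s are finite maxima over this box. *)
Definition bstar (crew cver : R) (s : nat) : nat :=
  \max_(p : 'I_s.+1 * 'I_s.+1 | inS crew cver s p.1 p.2) (p.2 : nat).

Definition jstar (crew cver : R) (s : nat) : nat :=
  \max_(p : 'I_s.+1 * 'I_s.+1 | inS crew cver s p.1 p.2) (p.2 - p.1)%N.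

Definition mS (crew cver : R) (s : nat) : int :=
  Num.ceil ((2 : R) ^+ (bstar crew cver s).+1).
Definition kS (crew cver : R) (s : nat) : int :=
  Num.ceil (6 * (2 : R) ^+ (jstar crew cver s)).

Definition dyadic_pair (q st : R) (a b : nat) : Prop :=
  (2 ^+ a.+1)^-1 < q /\ q <= (2 ^+ a)^-1 /\
  (2 ^+ b)^-1 <= st /\ st < 2 / 2 ^+ b.
End Defs.

Definition qt d (T : measurableType d) (R : realType) (P : probability T R)
  (X : T -> R) (t : R) : R := fine (P [set w | t <= X w]).
Definition st d (T : measurableType d) (R : realType) (P : probability T R)
  (X : T -> R) (V : T -> bool) (t : R) : R :=
  fine (P [set w | t <= X w /\ V w]).

(* Main.v *)
Require Import Defs.
From HB Require Import structures.
From mathcomp Require Import all_boot all_order all_algebra.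
From mathcomp Require Import all_classical all_reals all_analysis.
From mathcomp Require Import lra zify.
Import Order.TTheory GRing.Theory Num.Theory.
Local Open Scope ring_scope.
Local Open Scope classical_set_scope.

Lemma inS_bound (R : realType) (crew cver : R) s a b :
  0 < crew -> 0 < cver -> inS crew cver s a b -> (a <= b)%N /\ (b <= s)%N.
Proof.
move=> hc hv /and3P[hab _ hlt]; split => //.
have hm : cmin crew cver <= crew by rewrite /cmin ge_min lexx.
have h1 : 0 < cver * 2 ^+ (b - a) by rewrite mulr_gt0 // exprn_gt0.
have h2 : 0 <= (2:R) ^+ s.+1 by rewrite exprn_ge0.
have : crew * 2 ^+ b < crew * 2 ^+ s.+1.
  have := ler_wpM2l h2 hm.
  rewrite [_ * crew]mulrC => h3.
  apply: lt_le_trans h3; apply: le_lt_trans hlt; lra.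
rewrite ltr_pM2l // ltr_eXn2l; last lra.
by [].
Qed.

Lemma inS_shift (R : realType) (crew cver : R) s a b u :
  inS crew cver s a b -> inS crew cver (s + u) a (b + u).
Proof.
move=> /and3P[hab hle hlt].
have e : (b + u - a = (b - a) + u)%N by lia.
have hu : 0 < (2:R) ^+ u by rewrite exprn_gt0.
apply/and3P; split; first by rewrite (leq_trans hab) // leq_addr.
- rewrite e !exprD -(ler_pM2r hu) in hle *.
  by rewrite !mulrA -mulrDl mulrAC.
- rewrite e -addSn !exprD -(ltr_pM2r hu) in hlt *.
  by rewrite !mulrA -mulrDl mulrAC.
Qed.

Theorem lemma6 (d : measure_display) (T : measurableType d) (R : realType)
  (P : probability T R) (X : T -> R) (V : T -> bool)
  (mX : measurable_fun setT X) (mV : measurable [set w | V w])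
  (crew cver : R) (hcrew : 0 < crew) (hcver : 0 < cver)
  (t : R) (hq : 0 < qt P X t) (hs : 0 < st P X V t)
  (a b : nat) (hab : dyadic_pair (qt P X t) (st P X V t) a b)
  (sstar : nat) (hsstar : inS crew cver sstar a b) :
  forall u : nat,
    inS crew cver (sstar + u) a (b + u) /\
    (Num.ceil ((2 : R) ^+ (b + u).+1) <= mS crew cver (sstar + u))%R /\
    (Num.ceil (6 * (2 : R) ^+ (b - a + u)) <= kS crew cver (sstar + u))%R.
Proof.
move=> u.
have hS := @inS_shift R crew cver sstar a b u hsstar.
have [h1 h2] := @inS_bound R crew cver _ _ _ hcrew hcver hS.
have ha : (a < (sstar + u).+1)%N by rewrite ltnS (leq_trans h1 h2).
have hb : (b + u < (sstar + u).+1)%N by rewrite ltnS.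
pose p : 'I_(sstar + u).+1 * 'I_(sstar + u).+1 := (Ordinal ha, Ordinal hb).
have hp : inS crew cver (sstar + u) p.1 p.2 by exact: hS.
split; first exact: hS.
split.
- rewrite /mS; apply: le_ceil; rewrite ler_eXn2l; last lra.
  rewrite ltnS /bstar.
  exact: (@leq_bigmax_cond _ _ (fun p : 'I_(sstar + u).+1 * 'I_(sstar + u).+1 => (p.2 : nat)) p hp).
- rewrite /kS; apply: le_ceil; rewrite ler_pM2l; last lra.
  rewrite ler_eXn2l; last lra.
  have e : (b - a + u = (b + u) - a)%N.
    have [h1' _] := @inS_bound R crew cver _ _ _ hcrew hcver hsstar.
    by lia.
  rewrite e /jstar.
  exact: (@leq_bigmax_cond _ _ (fun p : 'I_(sstar + u).+1 * 'I_(sstar + u).+1 => (p.2 - p.1)%N) p hp).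
Qed.
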